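(* For $\tau\in\mathcal{L}$, the space $(\mathbb{R},\tau)$ is of first category if and only if every nonempty $\tau$-open set is an unbounded subset of $\mathbb{R}$.
   Context: $\eta$ denotes the Euclidean topology on $\mathbb{R}$. $\mathcal{L}$ denotes the family of all Hausdorff topologies $\tau$ on $\mathbb{R}$ with $\tau\subset\eta$. *)

(* Defs.v *)
(* The real line is an arbitrary R : realType
   (a complete archimedean ordered field, i.e. a model of the reals);
   the Euclidean topology eta is MathComp-Analysis's [open] on R. *)
From HB Require Import structures.
From mathcomp Require Import all_boot all_order all_algebra.
From mathcomp Require Import all_classical all_reals all_analysis.
Set Implicit Arguments. Unset Strict Implicit. Unset Printing Implicit Defensive.
Import Order.TTheory GRing.Theory Num.Theory.
Import numFieldNormedType.Exports.
Local Open Scope classical_set_scope.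
Local Open Scope ring_scope.

Section TopOnR.
Variable R : realType.

Definition is_topology (tau : set (set R)) : Prop :=
  [/\ tau setT, tau set0,
      (forall F : set (set R), F `<=` tau -> tau (\bigcup_(A in F) A))
    & (forall A B, tau A -> tau B -> tau (A `&` B))].

Definition hausdorff_fam (tau : set (set R)) : Prop :=
  forall x y : R, x <> y ->
    exists U V, [/\ tau U, tau V, U x, V y & U `&` V = set0].

Definition coarser_than_euclid (tau : set (set R)) : Prop :=
  forall U, tau U -> open U.

Definition in_L (tau : set (set R)) : Prop :=
  [/\ is_topology tau, hausdorff_fam tau & coarser_than_euclid tau].

Definition tclosure (tau : set (set R)) (A : set R) : set R :=
  [set x | forall U, tau U -> U x -> U `&` A !=set0].

Definition tinterior (tau : set (set R)) (A : set R) : set R :=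
  [set x | exists U, [/\ tau U, U x & U `<=` A]].

Definition tnowhere_dense (tau : set (set R)) (A : set R) : Prop :=
  tinterior tau (tclosure tau A) = set0.

Definition first_category (tau : set (set R)) : Prop :=
  exists F : nat -> set R,
    (forall n, tnowhere_dense tau (F n)) /\ \bigcup_n F n = setT.

Definition Rbounded (A : set R) : Prop :=
  exists M : R, forall x, A x -> `|x| <= M.

End TopOnR.

(* Main.v *)
Require Import Defs.
From mathcomp Require Import all_boot all_order all_algebra.
From mathcomp Require Import all_classical all_reals all_analysis.
Local Open Scope classical_set_scope.

From HB Require Import structures.
Import Order.TTheory GRing.Theory Num.Theory.
Import numFieldNormedType.Exports.
Local Open Scope classical_set_scope.
Local Open Scope ring_scope.

Section Tau.
Variables (R : realType) (tau : set (set R)).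
Variable htau : is_topology tau.

Definition tauT : Type := let _ := htau in R.
HB.instance Definition _ := Choice.on tauT.

Let opT : tau (setT : set tauT). Proof. by case: htau. Qed.
Let opI : setI_closed (tau : set (set tauT)).
Proof. by case: htau => _ _ _ h A B; apply: h. Qed.
Let op_bigU (I : Type) (f : I -> set tauT) : (forall i, tau (f i)) ->
    tau (\bigcup_i f i).
Proof.
case: htau => _ _ hU _ hf.
have -> : \bigcup_i f i = \bigcup_(A in range f) A.
  apply/seteqP; split => x.
    by move=> [i _ fx]; exists (f i) => //; exists i.
  by move=> [A [i _ <-] fx]; exists i.
by apply: hU => A [i _ <-].
Qed.
HB.instance Definition _ := isOpenTopological.Build tauT opT opI op_bigU.

Lemma tauT_open (A : set tauT) : open A = tau A.
Proof. by []. Qed.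

Lemma tau_compact_closed (hH : hausdorff_fam tau) (hc : coarser_than_euclid tau)
  (A : set R) : compact A -> tau (~` A).
Proof.
move=> cA.
have cont : continuous (fun x : R => (x : tauT)).
  by apply/continuousP => B oB; apply: hc.
have cA' : compact ((fun x : R => (x : tauT)) @` A).
  by apply: continuous_compact => //; exact: continuous_subspaceT.
rewrite image_id in cA'.
have hs : hausdorff_space tauT.
  rewrite open_hausdorff => x y /eqP xy.
  have [U [V [tU tV Ux Vy UV]]] := hH x y xy.
  exists (U, V) => /=; first by split; rewrite inE.
  by split => //; rewrite UV.
have := compact_closed hs cA'.
by rewrite -openC.
Qed.
End Tau.
Lemma key1 {R : realType} {tau : set (set R)} : in_L tau ->
  forall A : set R, compact A -> tau (~` A).
Proof. by case=> ht hH hc A cA; exact: (@tau_compact_closed R tau ht hH hc A cA). Qed.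

Lemma ballR_compact {R : realType} (M : R) : compact [set x : R | `|x| <= M].
Proof.
have -> : [set x : R | `|x| <= M] = `[-M, M]%classic.
  by apply/seteqP; split => x /=; rewrite in_itv /= ler_norml.
exact: segment_compact.
Qed.
Theorem proposition2 (R : realType) (tau : set (set R)) :
  in_L tau ->
  (first_category tau <->
   (forall U : set R, tau U -> U !=set0 -> ~ Rbounded U)).
Proof.
move=> hL; have [ht hH hc] := hL.
have tI : forall A B, tau A -> tau B -> tau (A `&` B) by case: ht.
split; last first.
  move=> H.
  exists (fun n : nat => [set x : R | `|x| <= n%:R]); split.
    move=> n; rewrite /tnowhere_dense; apply/seteqP; split => // x [U [tU Ux sU]].
    have sub : tclosure tau [set x : R | `|x| <= n%:R] `<=` [set x : R | `|x| <= n%:R].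
      move=> y cy; apply: contrapT => ny.
      have [z [nz fz]] := cy _ (key1 hL _ (ballR_compact n%:R)) ny.
      exact: nz.
    apply: (H U tU); first by exists x.
    by exists n%:R => y /sU/sub.
  apply/seteqP; split => // x _.
  exists (Num.Def.archi_bound `|x|) => //=.
  exact/ltW/archi_boundP.
move=> [F [hF cov]] U tU [u Uu] [M hM].
pose C n := tclosure tau (F n).
have FC : forall n, F n `<=` C n.
  by move=> n x Fx V tV Vx; exists x.
have oC : forall n, open (~` C n).
  move=> n; rewrite openE => x nCx.
  have [V [tV Vx VF]] : exists V, [/\ tau V, V x & V `&` F n = set0].
    apply: contrapT => nV; apply: nCx => V tV Vx.
    apply/set0P/negP => /eqP h; apply: nV; by exists V.
  rewrite /interior; apply: (@filterS _ _ _ V).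
    move=> y Vy Cy; have := Cy V tV Vy; rewrite VF => -[? []].
  by apply: open_nbhs_nbhs; split => //; apply: hc.
have [n [W [oW [w Ww] sW]]] : exists n W, [/\ open W, W !=set0 & W `<=` U `&` C n].
  apply: contrapT => NP.
  pose O n := ~` C n `|` ~` closure U.
  have oO : forall n, open (O n) /\ dense (O n).
    move=> n; split.
      by apply: openU => //; apply: closed_openC; exact: closed_closure.
    move=> Oz [p Ozp] oOz.
    have [ [v [Ozv Uv] ] | nOU] := pselect (Oz `&` U !=set0).
      have: ~ ((Oz `&` U) `<=` U `&` C n).
        move=> h; apply: NP; exists n, (Oz `&` U); split => //.
          by apply: openI => //; apply: hc.
        by exists v.
      move=> /existsNP [z /not_implyP [[Ozz Uz] nz]].
      exists z; split => //; left => Cz; exact: nz.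
    exists p; split => //; right => cl.
    have := cl Oz; case.
      by apply: open_nbhs_nbhs.
    move=> y [Uy Ozy]; apply: nOU; by exists y.
  have := Baire oO; move=> /(_ U) [].
  - by exists u.
  - exact: hc.
  move=> x [Ux Ox].
  have [i _ Fix] : (\bigcup_n F n) x by rewrite cov.
  case: (Ox i I) => h; first exact: h (FC i _ Fix).
  exact: h (subset_closure Ux).
have tW : tau W.
  pose A := [set x : R | `|x| <= M] `&` ~` W.
  have cA : compact A.
    by apply: compact_closedI; [exact: ballR_compact | exact: open_closedC].
  have -> : W = U `&` ~` A.
    apply/seteqP; split => y.
      by move=> Wy; split; [exact: (sW y Wy).1 | move=> [_ ]; apply].
    move=> [Uy nAy]; apply: contrapT => nW; apply: nAy; split => //.
    exact: hM.
  by apply: tI => //; apply: key1.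
have := hF n; rewrite /tnowhere_dense => /seteqP [+ _] => /(_ w); apply.
exists W; split => // y /sW [] _; exact.
Qed.
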